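(* Let $I_i=[t_i,t_{i+1}]$ with $t_i<t_{i+1}$, let $p\in\mathbb{N}$, and let $\phi_L,\phi,\phi_R:I_i\to\mathbb{R}$ be polynomials of degree at most $p$. Let $m\in\mathbb{N}\cdot p$ (a positive integer multiple of $p$). If $\phi_L(t)\le\phi(t)\le\phi_R(t)$ for all $t\in\mathcal{T}_{i,m}$ and $\sup_{t\in I_i}\{\phi_R(t)-\phi_L(t)\}\le C_{box}$, then for all $t\in I_i$, \[ \phi(t)\ge\phi_L(t)-\frac{\pi^2C_{box}}{8}\sqrt{p}\Big(\frac pm\Big)^2,\qquad \phi(t)\le\phi_R(t)+\frac{\pi^2C_{box}}{8}\sqrt{p}\Big(\frac pm\Big)^2. \]
   Context: $\mathcal{T}_{i,m}$ is the set of Chebyshev–Gauss–Lobatto points of degree $m$ on $I_i$: the images of $\tau_k=-\cos(k\pi/m)$, $k=0,\dots,m$, under the increasing affine map $[-1,1]\to I_i$. $C_{box}$ is a positive constant. *)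

(* Defs.v *)
From mathcomp Require Import all_boot all_order all_algebra.
From mathcomp Require Import all_classical all_reals all_analysis.
Set Implicit Arguments. Unset Strict Implicit. Unset Printing Implicit Defensive.
Import Order.TTheory GRing.Theory Num.Theory.
Local Open Scope ring_scope.

Definition cheb_tau (R : realType) (m k : nat) : R :=
  - cos (k%:R * pi / m%:R).

Definition cgl_node (R : realType) (a b : R) (m k : nat) : R :=
  a + (b - a) * (cheb_tau R m k + 1) / 2.

(* Main.v *)
Require Import Defs.
From mathcomp Require Import all_boot all_order all_algebra.
From mathcomp Require Import all_classical all_reals all_analysis.
From mathcomp Require Import ring lra zify.
Import Order.TTheory GRing.Theory Num.Theory.
Local Open Scope ring_scope.

Module Aux.
Set Implicit Arguments. Unset Strict Implicit. Unset Printing Implicit Defensive.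
Import numFieldNormedType.Exports.
Local Open Scope classical_set_scope.
Local Open Scope ring_scope.

Section S.
Variable R : realType.


Lemma is_derive_quad (al be ga x : R) :
  is_derive x (1:R) (fun t : R => al * (t * t) + be * t + ga) (al * (x *+ 2) + be).
Proof.
have H1 : is_derive x (1:R) (fun t : R => t * t) (x *+ 2).
  have -> : (fun t : R => t * t) = ((id : R -> R) * id)%R by apply/funext.
  apply: is_derive_eq.
  by rewrite [_%:A]mulr1 mulr2n.
have H2 : is_derive x (1:R) (fun t : R => al * (t * t)) (al * (x *+ 2)).
  exact: (@is_deriveZ _ _ _ (fun t : R => t * t) al x 1 _ H1).
have H3 : is_derive x (1:R) (fun t : R => be * t) (be * 1).
  exact: (@is_deriveZ _ _ _ id be x 1 1).
have H4 := @is_deriveD _ _ _ _ _ x 1 _ _ H2 H3.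
have H5 := @is_deriveD _ _ _ _ _ x 1 _ _ H4 (@is_derive_cst _ _ _ ga x 1).
have -> : (fun t : R => al * (t * t) + be * t + ga) =
   ((fun t : R => al * (t * t)) + (fun t : R => be * t) + cst ga)%R by apply/funext.
move: H5; rewrite mulr1 addr0 => H5. exact: H5.
Qed.

Lemma fsum (n : nat) (h : 'I_n -> R -> R) (x : R) :
  (\sum_(i < n) h i) x = \sum_(i < n) h i x.
Proof. by rewrite fct_sumE. Qed.
Lemma is_derive_cosM (c x : R) :
  is_derive x 1 (fun t => cos (c * t)) (- (c * sin (c * x))).
Proof.
have dl : derivable (fun t : R => c * t) x 1.
  by apply: ex_derive; apply: is_deriveZ.
have -> : (fun t => cos (c * t)) = (@cos R) \o (fun t => c * t) by [].
apply: DeriveDef.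
  apply/derivable1_diffP; apply: differentiable_comp.
    exact/derivable1_diffP.
  exact/derivable1_diffP/derivable_cos.
rewrite -derive1E derive1_comp //.
all: try exact: derivable_cos.
rewrite !derive1E.
rewrite (@derive_val _ _ _ _ _ _ _ (is_derive_cos _)).
have H : is_derive x 1 (fun t : R => c * t) (c * 1).
  exact: (@is_deriveZ _ _ _ id c x 1 1).
by rewrite (@derive_val _ _ _ _ _ _ _ H) mulr1 mulNr mulrC.
Qed.

Lemma concave0 (G G1 G2 : R -> R) (a b : R) :
  (forall x : R, is_derive x (1:R) G (G1 x)) -> (forall x : R, is_derive x (1:R) G1 (G2 x)) ->
  (forall x, G2 x <= 0) -> G a = 0 -> G b = 0 ->
  forall x, a <= x <= b -> 0 <= G x.
Proof.
move=> dG dG1 G2le Ga Gb x /andP[ax xb].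
rewrite leNgt; apply/negP => Gx.
have cG u v : {within `[u, v], continuous G}.
  by apply: derivable_within_continuous => y _; apply: ex_derive; apply: dG.
have cG1 u v : {within `[u, v], continuous G1}.
  by apply: derivable_within_continuous => y _; apply: ex_derive; apply: dG1.
have ax' : a < x.
  rewrite lt_neqAle ax andbT; apply/negP => /eqP E.
  by move: Gx; rewrite -E Ga ltxx.
have xb' : x < b.
  rewrite lt_neqAle xb andbT; apply/negP => /eqP E.
  by move: Gx; rewrite E Gb ltxx.
have [c1 c1in E1] := MVT ax' (fun y _ => dG y) (cG a x).
have [c2 c2in E2] := MVT xb' (fun y _ => dG y) (cG x b).
move: c1in c2in; rewrite !in_itv /= => /andP[ac1 c1x] /andP[xc2 c2b].
have c12 : c1 < c2 by apply: lt_trans c1x xc2.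
have [c3 _ E3] := MVT c12 (fun y _ => dG1 y) (cG1 c1 c2).
have h1 : G1 c1 < 0 by rewrite Ga in E1; nra.
have h2 : 0 < G1 c2 by rewrite Gb in E2; nra.
have := G2le c3; nra.
Qed.

Lemma is_derive_sinM (c x : R) :
  is_derive x (1:R) (fun t => sin (c * t)) (c * cos (c * x)).
Proof.
have dl : derivable (fun t : R => c * t) x 1.
  by apply: ex_derive; apply: is_deriveZ.
have -> : (fun t => sin (c * t)) = (@sin R) \o (fun t => c * t) by [].
apply: DeriveDef.
  apply/derivable1_diffP; apply: differentiable_comp.
    exact/derivable1_diffP.
  exact/derivable1_diffP/derivable_sin.
rewrite -derive1E derive1_comp //.
all: try exact: derivable_sin.
rewrite !derive1E.
rewrite (@derive_val _ _ _ _ _ _ _ (is_derive_sin _)).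
have H : is_derive x 1 (fun t : R => c * t) (c * 1).
  exact: (@is_deriveZ _ _ _ id c x 1 1).
by rewrite (@derive_val _ _ _ _ _ _ _ H) mulr1 mulrC.
Qed.

Lemma is_derive_cossum (n : nat) (b c : nat -> R) (x : R) :
  is_derive x (1:R) (fun t => \sum_(j < n) b j * cos (c j * t))
    (\sum_(j < n) (- (b j * c j)) * sin (c j * x)).
Proof.
have -> : (fun t => \sum_(j < n) b j * cos (c j * t)) =
   \sum_(j < n) (fun t => b j * cos (c j * t)).
  by apply/funext => t; rewrite fct_sumE.
have H := @is_derive_sum R R R n (fun (j : 'I_n) t => b j * cos (c j * t)) x 1
  (fun j => - (b j * c j) * sin (c j * x)) (fun j => _).
apply: H => j.
have Hj : is_derive x (1:R) (fun t => b j * cos (c j * t)) (b j * (- (c j * sin (c j * x)))).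
  exact: (@is_deriveZ _ _ _ (fun t => cos (c j * t)) (b j) x 1 _ (is_derive_cosM _ _)).
apply: (is_derive_eq Hj).
by ring.
Qed.

Lemma is_derive_sinsum (n : nat) (b c : nat -> R) (x : R) :
  is_derive x (1:R) (fun t => \sum_(j < n) b j * sin (c j * t))
    (\sum_(j < n) (b j * c j) * cos (c j * x)).
Proof.
have -> : (fun t => \sum_(j < n) b j * sin (c j * t)) =
   \sum_(j < n) (fun t => b j * sin (c j * t)).
  by apply/funext => t; rewrite fct_sumE.
have H := @is_derive_sum R R R n (fun (j : 'I_n) t => b j * sin (c j * t)) x 1
  (fun j => b j * c j * cos (c j * x)) (fun j => _).
apply: H => j.
have Hj : is_derive x (1:R) (fun t => b j * sin (c j * t)) (b j * (c j * cos (c j * x))).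
  exact: (@is_deriveZ _ _ _ (fun t => sin (c j * t)) (b j) x 1 _ (is_derive_sinM _ _)).
apply: (is_derive_eq Hj).
by ring.
Qed.

Lemma interp_lb (n : nat) (a0 : R) (b c : nat -> R) (lo hi : R) :
  lo < hi ->
  0 <= a0 + \sum_(j < n) b j * cos (c j * lo) ->
  0 <= a0 + \sum_(j < n) b j * cos (c j * hi) ->
  forall th, lo <= th <= hi ->
  - ((\sum_(j < n) `|b j| * c j ^+ 2) * (hi - lo) ^+ 2 / 8)
    <= a0 + \sum_(j < n) b j * cos (c j * th).
Proof.
move=> hlo ga0 gb0 th hth.
set g := fun t => a0 + \sum_(j < n) b j * cos (c j * t).
change (is_true (- ((\sum_(j < n) `|b j| * c j ^+ 2) * (hi - lo) ^+ 2 / 8) <= g th)).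
change (is_true (0 <= g lo)) in ga0; change (is_true (0 <= g hi)) in gb0.
set M := \sum_(j < n) `|b j| * c j ^+ 2.
have M0 : 0 <= M by apply: sumr_ge0 => j _; rewrite mulr_ge0 // sqr_ge0.
have d0 : hi - lo != 0 by rewrite subr_eq0 gt_eqF.
set ya := g lo; set yb := g hi.
set al := M / 2.
set be := (yb - ya) / (hi - lo) - M / 2 * (lo + hi).
set ga := (ya * hi - yb * lo) / (hi - lo) + M / 2 * (lo * hi).
pose Q := fun t : R => al * (t * t) + be * t + ga.
pose G := fun t => g t - Q t.
pose G1 := fun t => (\sum_(j < n) (- (b j * c j)) * sin (c j * t)) - (0 * (t * t) + (al * 2) * t + be).
pose G2 := fun t => (\sum_(j < n) (- (b j * c j) * c j) * cos (c j * t)) - (al * 2).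
have dG : forall x : R, is_derive x (1:R) G (G1 x).
  move=> x.
  have H1 := @is_deriveD _ _ _ _ _ x 1 _ _ (@is_derive_cst _ _ _ a0 x 1) (is_derive_cossum n b c x).
  have H2 := @is_deriveB _ _ _ _ _ x 1 _ _ H1 (is_derive_quad al be ga x).
  have -> : G = (cst a0 + (fun t => \sum_(j < n) b j * cos (c j * t))) -
     (fun t => al * (t * t) + be * t + ga) by apply/funext.
  apply: (is_derive_eq H2).
  rewrite /G1 /=; rewrite mulr2n; ring.
have dG1 : forall x : R, is_derive x (1:R) G1 (G2 x).
  move=> x.
  have H2 := @is_deriveB _ _ _ _ _ x 1 _ _ (is_derive_sinsum n (fun j => - (b j * c j)) c x)
      (is_derive_quad 0 (al * 2) be x).
  have -> : G1 = (fun t => \sum_(j < n) (- (b j * c j)) * sin (c j * t)) -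
     (fun t => 0 * (t * t) + (al * 2) * t + be) by apply/funext.
  apply: (is_derive_eq H2).
  rewrite /G2 /=; ring.
have G2le : forall x, G2 x <= 0.
  move=> x; rewrite /G2 subr_le0.
  have -> : al * 2 = M by rewrite /al; field.
  apply: ler_sum => j _.
  have -> : - (b j * c j) * c j * cos (c j * x) = - (b j * (c j ^+ 2 * cos (c j * x))).
    by rewrite expr2; ring.
  apply: le_trans (ler_norm _) _.
  rewrite normrN normrM normrM (ger0_norm (sqr_ge0 (c j))).
  rewrite ler_wpM2l //.
  rewrite -[X in _ <= X]mulr1 ler_wpM2l ?sqr_ge0 //; exact: cos_max.
have Ga : G lo = 0.
  rewrite /G /Q /al /be /ga -/ya; field; exact: d0.
have Gb : G hi = 0.
  rewrite /G /Q /al /be /ga -/yb; field; exact: d0.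
have := @concave0 G G1 G2 lo hi dG dG1 G2le Ga Gb th hth.
rewrite /G subr_ge0 => HQ.
apply: le_trans HQ.
have -> : Q th = (ya * (hi - th) + yb * (th - lo)) / (hi - lo) + M / 2 * ((th - lo) * (th - hi)).
  rewrite /Q /al /be /ga; field; exact: d0.
have h1 : 0 <= (ya * (hi - th) + yb * (th - lo)) / (hi - lo).
  case/andP: hth => h1 h2.
  apply: divr_ge0; last by rewrite subr_ge0 ltW.
  by apply: addr_ge0; apply: mulr_ge0; rewrite // subr_ge0.
have h2 : - ((hi - lo) ^+ 2 / 4) <= (th - lo) * (th - hi).
  have := sqr_ge0 (th - (lo + hi) / 2); nra.
have h3 : M / 2 * (- ((hi - lo) ^+ 2 / 4)) <= M / 2 * ((th - lo) * (th - hi)).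
  by apply: ler_wpM2l => //; apply: divr_ge0.
have -> : - (M * (hi - lo) ^+ 2 / 8) = 0 + M / 2 * (- ((hi - lo) ^+ 2 / 4)) by field.
exact: lerD.
Qed.


Lemma sin_natpi (r : nat) : sin (r%:R * pi) = 0 :> R.
Proof.
elim: r => [|r IH]; first by rewrite mul0r sin0.
by rewrite -addn1 natrD mulrDl mul1r sinDpi IH oppr0.
Qed.

Lemma cos_nat2pi (l : nat) : cos (l%:R * (pi *+ 2)) = 1 :> R.
Proof.
elim: l => [|l IH]; first by rewrite mul0r cos0.
by rewrite -addn1 natrD mulrDl mul1r cosD2pi IH.
Qed.

Lemma cos_sum_zero (p r : nat) : (0 < r)%N -> (r < p.*2)%N ->
  \sum_(l < p.+1) cos (l%:R * (r%:R * pi / p%:R)) =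
    (1 + cos (p%:R * (r%:R * pi / p%:R))) / 2 :> R.
Proof.
move=> r0 rp.
have p0 : (0 < p)%N by case: p rp => //; rewrite double0.
set x := r%:R * pi / p%:R.
have pR : (0 : R) < p%:R by rewrite ltr0n.
have rR : (0 : R) < r%:R by rewrite ltr0n.
have rpR : (r%:R : R) < (p.*2)%:R by rewrite ltr_nat.
have px : p%:R * x = r%:R * pi by rewrite /x; field; rewrite gt_eqF.
have s0 : 0 < sin (x / 2).
  apply: sin_gt0_pi; apply/andP; split.
    by rewrite /x !divr_gt0 // mulr_gt0 // pi_gt0.
  have -> : x / 2 = (r%:R / (p%:R * 2)) * pi by rewrite /x; field; rewrite gt_eqF.
  rewrite -[X in _ < X]mul1r ltr_pM2r ?pi_gt0 // ltr_pdivrMr ?mulr_gt0 // mul1r.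
  by rewrite -muln2 natrM in rpR.
set f := fun l : nat => sin (l%:R * x - x / 2).
have key : forall l : nat, (sin (x / 2) *+ 2) * cos (l%:R * x) = f l.+1 - f l.
  move=> l; rewrite /f.
  have -> : l.+1%:R * x - x / 2 = l%:R * x + x / 2 by rewrite -addn1 natrD; field.
  rewrite sinD sinB; ring.
have E : (sin (x / 2) *+ 2) * \sum_(l < p.+1) cos (l%:R * x) = f p.+1 - f 0.
  rewrite mulr_sumr.
  rewrite -(telescope_sumr _ (leq0n p.+1)) big_mkord.
  by apply: eq_bigr => l _; rewrite key.
have Fp : f p.+1 = cos (p%:R * x) * sin (x / 2).
  rewrite /f.
  have -> : p.+1%:R * x - x / 2 = p%:R * x + x / 2 by rewrite -addn1 natrD; field.
  by rewrite sinD px sin_natpi mul0r add0r.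
have F0 : f 0 = - sin (x / 2) by rewrite /f mul0r sub0r sinN.
apply: (@mulfI _ (sin (x / 2) *+ 2)).
  by rewrite mulrn_eq0 /= gt_eqF.
rewrite E Fp F0; field.
by [].
Qed.

Definition trap (p : nat) (F : nat -> R) := \sum_(l < p) (F l + F l.+1) / 2.

Lemma trap_alt p F : trap p F = \sum_(l < p.+1) F l - (F 0%N + F p) / 2.
Proof.
rewrite /trap -mulr_suml big_split /=.
have A : \sum_(l < p.+1) F l = \sum_(l < p) F l + F p by rewrite big_ord_recr.
have B : \sum_(l < p.+1) F l = F 0%N + \sum_(l < p) F l.+1 by rewrite big_ord_recl.
have C : \sum_(l < p) F l.+1 = \sum_(l < p) F l + F p - F 0%N.
  by rewrite -A B addrAC subrr add0r.
rewrite C A; field; done.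
Qed.

Lemma trap_const p c : trap p (fun _ => c) = p%:R * c.
Proof.
rewrite /trap.
have -> : (c + c) / 2 = c by field; done.
by rewrite sumr_const card_ord mulr_natl.
Qed.

Lemma trap_le p F G : (forall l, (l <= p)%N -> F l <= G l) -> trap p F <= trap p G.
Proof.
move=> H; rewrite /trap; apply: ler_sum => l _.
rewrite ler_pM2r ?invr_gt0 //; apply: lerD; apply: H.
  exact: ltnW.
exact: ltn_ord.
Qed.

Lemma trap_sum p n (H : 'I_n -> nat -> R) :
  trap p (fun l => \sum_(i < n) H i l) = \sum_(i < n) trap p (H i).
Proof.
rewrite /trap exchange_big /=; apply: eq_bigr => l _.
by rewrite -mulr_suml big_split.
Qed.

Lemma trap_scale p c F : trap p (fun l => c * F l) = c * trap p F.
Proof.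
rewrite /trap mulr_sumr; apply: eq_bigr => l _; ring.
Qed.

Lemma trap_mid p F G : trap p (fun l => (F l + G l) / 2) = (trap p F + trap p G) / 2.
Proof.
rewrite /trap -big_split /= mulr_suml; apply: eq_bigr => l _; ring.
Qed.

Definition cc (p i l : nat) : R := cos (i%:R * (l%:R * pi / p%:R)).

Lemma Tc_zero p r : (0 < r)%N -> (r < p.*2)%N -> trap p (cc p r) = 0.
Proof.
move=> r0 rp; rewrite trap_alt /cc.
have E : forall l : nat, r%:R * (l%:R * pi / p%:R) = l%:R * (r%:R * pi / p%:R) :> R.
  by move=> l; ring.
under eq_bigr do rewrite E.
rewrite cos_sum_zero // !E mul0r cos0; ring.
Qed.

Lemma Tc_2p p : (0 < p)%N -> trap p (cc p p.*2) = p%:R.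
Proof.
move=> p0.
have -> : cc p p.*2 = fun _ => 1.
  apply/funext => l; rewrite /cc.
  have -> : (p.*2)%:R * (l%:R * pi / p%:R) = l%:R * (pi *+ 2) :> R.
    rewrite -muln2 natrM mulr2n; field; by rewrite pnatr_eq0 -lt0n.
  exact: cos_nat2pi.
by rewrite trap_const mulr1.
Qed.

Lemma Tc_0 p : trap p (cc p 0) = p%:R.
Proof.
have -> : cc p 0 = fun _ => 1 by apply/funext => l; rewrite /cc mul0r cos0.
by rewrite trap_const mulr1.
Qed.

Lemma cc_prod p i j l : cc p i l * cc p j l =
  (cc p (i + j) l + cos ((i%:R - j%:R) * (l%:R * pi / p%:R))) / 2.
Proof.
rewrite /cc natrD !mulrDl mulNr cosD cosB; field; done.
Qed.

Lemma orth p i j : (i <= p)%N -> (j <= p)%N -> i != j ->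
  trap p (fun l => cc p i l * cc p j l) = 0.
Proof.
move=> ip jp ij.
under [X in trap p X]funext do rewrite cc_prod.
rewrite trap_mid Tc_zero; first last.
- case: (ltngtP i j) ij => // h _; lia.
- case: (ltngtP i j) ij => // h _; lia.
have [lt|ge] := ltnP i j.
  have -> : (fun l => cos ((i%:R - j%:R) * (l%:R * pi / p%:R))) = cc p (j - i) :> (nat -> R).
    apply/funext => l; rewrite /cc -cosN; congr cos.
    rewrite natrB ?(ltnW lt) //; ring.
  rewrite Tc_zero; [by rewrite addr0 mul0r| lia | lia].
have -> : (fun l => cos ((i%:R - j%:R) * (l%:R * pi / p%:R))) = cc p (i - j) :> (nat -> R).
  apply/funext => l; rewrite /cc; congr cos.
  by rewrite natrB.
rewrite Tc_zero; [by rewrite addr0 mul0r| | lia].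
case: (ltngtP i j) ij ge => // h _ _; lia.
Qed.

Lemma diag p i : (0 < p)%N -> (i <= p)%N -> p%:R / 2 <= trap p (fun l => cc p i l * cc p i l).
Proof.
move=> p0 ip.
under [X in trap p X]funext do rewrite cc_prod subrr mul0r cos0.
rewrite (trap_mid p (cc p (i + i)) (fun _ => 1)) trap_const mulr1 addnn.
rewrite ler_pM2r ?invr_gt0 // lerDr.
have [->|i0] := eqVneq i 0%N; first by rewrite Tc_0.
have [->|ipn] := eqVneq i p; first by rewrite Tc_2p.
rewrite Tc_zero //.
  by rewrite double_gt0 lt0n.
by rewrite ltn_double ltn_neqAle ipn.
Qed.
Lemma parseval p (a : nat -> R) (K : R) : (0 < p)%N ->
  (forall l, (l <= p)%N -> `|\sum_(j < p.+1) a j * cc p j l| <= K) ->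
  \sum_(j < p.+1) a j ^+ 2 <= 2 * K ^+ 2.
Proof.
move=> p0 H.
pose v := fun l => \sum_(j < p.+1) a j * cc p j l.
have up : trap p (fun l => v l ^+ 2) <= p%:R * K ^+ 2.
  rewrite -trap_const; apply: trap_le => l lp.
  have h := H l lp; rewrite -/(v l) in h.
  rewrite -real_normK ?num_real //.
  have := normr_ge0 (v l); nra.
have eq1 : trap p (fun l => v l ^+ 2) = \sum_(i < p.+1) \sum_(j < p.+1)
    a i * a j * trap p (fun l => cc p i l * cc p j l).
  have -> : (fun l => v l ^+ 2) = (fun l => \sum_(i < p.+1) \sum_(j < p.+1)
      a i * a j * (cc p i l * cc p j l)).
    apply/funext => l; rewrite /v expr2 mulr_suml; apply: eq_bigr => i _.
    rewrite mulr_sumr; apply: eq_bigr => j _; ring.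
  rewrite trap_sum; apply: eq_bigr => i _; rewrite trap_sum; apply: eq_bigr => j _.
  by rewrite trap_scale.
have eq2 : \sum_(i < p.+1) \sum_(j < p.+1)
    a i * a j * trap p (fun l => cc p i l * cc p j l) =
    \sum_(i < p.+1) a i ^+ 2 * trap p (fun l => cc p i l * cc p i l).
  apply: eq_bigr => i _; rewrite (bigD1 i) //= big1 ?addr0.
    by rewrite expr2.
  move=> j ji; rewrite orth ?mulr0 //.
  - by rewrite -ltnS ltn_ord.
  - by rewrite -ltnS ltn_ord.
  - by rewrite eq_sym.
have lo : (p%:R / 2) * \sum_(i < p.+1) a i ^+ 2 <= trap p (fun l => v l ^+ 2).
  rewrite eq1 eq2 mulr_sumr; apply: ler_sum => i _; rewrite mulrC.
  apply: ler_wpM2l; first exact: sqr_ge0.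
  by apply: diag => //; rewrite -ltnS ltn_ord.
have pR : (0:R) < p%:R by rewrite ltr0n.
have := le_trans lo up; nra.
Qed.


Lemma cauchy_schwarz n (u : nat -> R) :
  (\sum_(j < n) u j) ^+ 2 <= n%:R * \sum_(j < n) u j ^+ 2.
Proof.
elim: n => [|n IH]; first by rewrite !big_ord0 mul0r expr2 mulr0.
case: n IH => [|n] IH.
  by rewrite !big_ord1 mul1r.
rewrite [\sum_(j < n.+2) u j]big_ord_recr [\sum_(j < n.+2) u j ^+ 2]big_ord_recr /=.
set S := \sum_(j < n.+1) u j in IH *.
set Q := \sum_(j < n.+1) u j ^+ 2 in IH *.
have Q0 : 0 <= Q by apply: sumr_ge0 => j _; exact: sqr_ge0.
have N0 : (0:R) < n.+1%:R by rewrite ltr0n.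
have -> : (n.+2)%:R = n.+1%:R + 1 :> R by rewrite natr1.
have h1 : (n.+1%:R + 1) * S ^+ 2 <= (n.+1%:R + 1) * (n.+1%:R * Q).
  by rewrite ler_wpM2l // addr_ge0 // ltW.
rewrite -(ler_pM2l N0).
have := sqr_ge0 (n.+1%:R * u n.+1 - S).
nra.
Qed.
Lemma core_theta (p q : nat) (a : nat -> R) (C : R) :
  (0 < p)%N -> (0 < q)%N -> 0 <= C ->
  (forall k, (k <= q * p)%N ->
     0 <= \sum_(j < p.+1) a j * cos (j%:R * (k%:R * pi / (q * p)%N%:R))) ->
  (forall l, (l <= p)%N ->
     \sum_(j < p.+1) a j * cos (j%:R * ((l * q)%N%:R * pi / (q * p)%N%:R)) <= C) ->
  forall th, 0 <= th <= pi ->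
  - (pi ^+ 2 * C / 8 * Num.sqrt p%:R * (p%:R / (q * p)%N%:R) ^+ 2)
    <= \sum_(j < p.+1) a j * cos (j%:R * th).
Proof.
move=> p0 q0 C0 Hn Hc th hth.
set m := (q * p)%N in Hn Hc *.
have m0 : (0 < m)%N by rewrite muln_gt0 q0 p0.
have mR : (0:R) < m%:R by rewrite ltr0n.
have pR : (0:R) < p%:R by rewrite ltr0n.
have qR : (0:R) < q%:R by rewrite ltr0n.
pose g := fun t => \sum_(j < p.+1) a j * cos (j%:R * t).
have nodep : forall l, (l * q)%N%:R * pi / m%:R = l%:R * pi / p%:R :> R.
  move=> l; rewrite /m !natrM; field.
  by rewrite !gt_eqF.
pose a' := fun j : nat => if j == 0%N then a 0%N - C / 2 else a j.
have Hv : forall l, (l <= p)%N -> `|\sum_(j < p.+1) a' j * cc p j l| <= C / 2.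
  move=> l lp.
  have E : \sum_(j < p.+1) a' j * cc p j l = g (l%:R * pi / p%:R) - C / 2.
    rewrite /g !big_ord_recl /= /cc /a' /= !mul0r cos0 !mulr1.
    by rewrite addrAC.
  rewrite E.
  have h1 : 0 <= g (l%:R * pi / p%:R).
    have := Hn (l * q)%N; rewrite nodep; apply.
    by rewrite /m mulnC leq_mul2l lp orbT.
  have h2 : g (l%:R * pi / p%:R) <= C by have := Hc l lp; rewrite nodep.
  rewrite ler_norml; apply/andP; split; lra.
have Hp := parseval p0 Hv.
have Hs : \sum_(j < p) a j.+1 ^+ 2 <= C ^+ 2 / 2.
  have E : \sum_(j < p.+1) a' j ^+ 2 = a' 0%N ^+ 2 + \sum_(j < p) a j.+1 ^+ 2.
    by rewrite big_ord_recl.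
  rewrite E in Hp.
  have := sqr_ge0 (a' 0%N).
  have E2 : 2 * (C / 2) ^+ 2 = C ^+ 2 / 2 by field.
  rewrite E2 in Hp.
  lra.
pose S := \sum_(j < p) `|a j.+1|.
have S0 : 0 <= S by apply: sumr_ge0 => j _.
have HS : S <= Num.sqrt p%:R * C.
  have h : S ^+ 2 <= p%:R * C ^+ 2.
    apply: le_trans (cauchy_schwarz p (fun j => `|a j.+1|)) _.
    under eq_bigr do rewrite real_normK ?num_real //.
    rewrite ler_wpM2l ?ler0n //.
    have := sqr_ge0 C; lra.
  have -> : S = Num.sqrt (S ^+ 2) by rewrite sqrtr_sqr ger0_norm.
  rewrite -[X in _ <= _ * X]ger0_norm // -sqrtr_sqr -sqrtrM ?ler0n //.
  by rewrite ler_sqrt // mulr_ge0 ?ler0n ?sqr_ge0.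
pose M := \sum_(j < p.+1) `|a j| * (j%:R) ^+ 2.
have HM : M <= p%:R ^+ 2 * S.
  rewrite /M big_ord_recl /=.
  rewrite expr0n /= mulr0 add0r /S mulr_sumr; apply: ler_sum => j _.
  have -> : bump 0 j = j.+1 by [].
  rewrite mulrC ler_wpM2r //.
  have h : (j.+1%:R : R) <= p%:R by rewrite ler_nat.
  have h0 : (0 : R) <= j.+1%:R by rewrite ler0n.
  nra.
pose k0 := Num.truncn (th * m%:R / pi).
have pi0 := pi_gt0 R.
case/andP: hth => th0 thpi.
have hpos : 0 <= th * m%:R / pi by rewrite divr_ge0 // ?mulr_ge0 // ltW.
have hk0 := truncn_itv hpos.
rewrite -/k0 in hk0; case/andP: hk0 => hk0l hk0r.
pose k := minn k0 m.-1.
have km : (k < m)%N.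
  by apply: leq_ltn_trans (geq_minr _ _) _; rewrite ltn_predL.
pose lo : R := k%:R * pi / m%:R.
pose hi : R := k.+1%:R * pi / m%:R.
have lohi : lo < hi.
  by rewrite /lo /hi ltr_pM2r ?invr_gt0 // ltr_pM2r // ltr_nat.
have hlo : lo <= th.
  have : (k%:R : R) <= k0%:R by rewrite ler_nat /k geq_minl.
  move=> h; rewrite /lo ler_pdivrMr // -ler_pdivlMr //.
  apply: le_trans h _; apply: le_trans hk0l _; rewrite ler_pdivrMr // mulrAC.
  by rewrite mulfK ?gt_eqF.
have hhi : th <= hi.
  rewrite /hi; have [lt|ge] := ltnP k0 m.
    have -> : k = k0 by rewrite /k; apply/minn_idPl; rewrite -ltnS prednK.
    rewrite ler_pdivlMr // -ler_pdivrMr //; exact: ltW.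
  have -> : k = m.-1.
    by rewrite /k; apply/minn_idPr; apply: leq_trans (leq_pred m) ge.
  by rewrite prednK // mulrAC mulfV ?gt_eqF // mul1r.
have H := interp_lb (n := p.+1) (a0 := 0) (b := a) (c := fun j : nat => j%:R) lohi.
have := H _ _ th; rewrite !add0r; move=> {}H.
have {}H := H (Hn k (ltnW km)) (Hn k.+1 km) (introT andP (conj hlo hhi)).
apply: le_trans H.
rewrite lerN2 -/M.
have -> : hi - lo = pi / m%:R by rewrite /hi /lo -addn1 natrD; field; rewrite gt_eqF.
apply: (@le_trans _ _ ((p%:R ^+ 2 * (Num.sqrt p%:R * C)) * (pi / m%:R) ^+ 2 / 8)).
  rewrite ler_wpM2r // ler_wpM2r ?sqr_ge0 //.
  apply: le_trans HM _; rewrite ler_wpM2l ?sqr_ge0 //.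
have -> : p%:R ^+ 2 * (Num.sqrt p%:R * C) * (pi / m%:R) ^+ 2 / 8 =
  pi ^+ 2 * C / 8 * Num.sqrt p%:R * (p%:R / m%:R) ^+ 2 by field; rewrite gt_eqF.
exact: lexx.
Qed.


Definition cosrep (n : nat) (f : R -> R) :=
  exists a : nat -> R, forall t, f t = \sum_(j < n.+1) a j * cos (j%:R * t).

Lemma cosrep_ext n f g : (forall t, f t = g t) -> cosrep n f -> cosrep n g.
Proof. by move=> E [a Ha]; exists a => t; rewrite -E. Qed.

Lemma cosrep_mono n n' f : (n <= n')%N -> cosrep n f -> cosrep n' f.
Proof.
move=> nn [a Ha]; exists (fun j => if (j < n.+1)%N then a j else 0) => t.
rewrite Ha (big_ord_widen n'.+1 (fun j => a j * cos (j%:R * t))) // big_mkcond.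
by apply: eq_bigr => j _; case: ifP => _; rewrite ?mul0r.
Qed.

Lemma cosrep_add n f g : cosrep n f -> cosrep n g -> cosrep n (fun t => f t + g t).
Proof.
move=> [a Ha] [b Hb]; exists (fun j => a j + b j) => t.
by rewrite Ha Hb -big_split; apply: eq_bigr => j _; rewrite mulrDl.
Qed.

Lemma cosrep_scale n c f : cosrep n f -> cosrep n (fun t => c * f t).
Proof.
move=> [a Ha]; exists (fun j => c * a j) => t.
by rewrite Ha mulr_sumr; apply: eq_bigr => j _; rewrite mulrA.
Qed.

Lemma cosrep_const c : cosrep 0 (fun _ => c).
Proof. by exists (fun _ => c) => t; rewrite big_ord1 mul0r cos0 mulr1. Qed.

Lemma cosrep_single k : cosrep k (fun t => cos (k%:R * t)).
Proof.
exists (fun j => if j == k then 1 else 0) => t.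
rewrite big_ord_recr /= eqxx mul1r big1 ?add0r // => j _.
by rewrite ifN ?mul0r // neq_ltn ltn_ord.
Qed.

Lemma cosrep_sum n m (h : 'I_m -> R -> R) :
  (forall i, cosrep n (h i)) -> cosrep n (fun t => \sum_(i < m) h i t).
Proof.
elim: m h => [|m IH] h H.
  apply: (cosrep_ext (f := fun _ => 0)); first by move=> t; rewrite big_ord0.
  exact: cosrep_mono (cosrep_const 0).
apply: (cosrep_ext (f := fun t => \sum_(i < m) h (widen_ord (leqnSn m) i) t + h ord_max t)).
  by move=> t; rewrite big_ord_recr.
apply: cosrep_add; last exact: H.
exact: IH.
Qed.

Lemma cosrep_term j : cosrep j.+1 (fun t => cos t * cos (j%:R * t)).
Proof.
case: j => [|i].
  apply: cosrep_ext (cosrep_single 1) => t; rewrite mul0r cos0 mulr1 mul1r //.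
apply: (cosrep_ext (f := fun t => 2^-1 * cos (i.+2%:R * t) + 2^-1 * cos (i%:R * t))).
  move=> t.
  have -> : i.+2%:R * t = i.+1%:R * t + t by rewrite -addn1 natrD mulrDl mul1r.
  have -> : i%:R * t = i.+1%:R * t - t by rewrite -addn1 natrD mulrDl mul1r addrK.
  rewrite cosD cosB; field; done.
apply: cosrep_add; apply: cosrep_scale; first exact: cosrep_single.
apply: cosrep_mono (cosrep_single i); lia.
Qed.

Lemma cosrep_mulcos n f : cosrep n f -> cosrep n.+1 (fun t => cos t * f t).
Proof.
move=> [a Ha].
apply: (cosrep_ext (f := fun t => \sum_(j < n.+1) a j * (cos t * cos (j%:R * t)))).
  by move=> t; rewrite Ha mulr_sumr; apply: eq_bigr => j _; rewrite mulrCA.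
apply: cosrep_sum => j; apply: cosrep_scale.
apply: cosrep_mono (cosrep_term j); rewrite ltnS -ltnS; exact: ltn_ord.
Qed.

Lemma cosrep_pow (c0 c1 : R) i : cosrep i (fun t => (c0 + c1 * cos t) ^+ i).
Proof.
elim: i => [|i IH].
  by apply: cosrep_ext (cosrep_const 1) => t; rewrite expr0.
apply: (cosrep_ext (f := fun t => c0 * (c0 + c1 * cos t) ^+ i + c1 * (cos t * (c0 + c1 * cos t) ^+ i))).
  by move=> t; rewrite exprS; ring.
apply: cosrep_add; apply: cosrep_scale.
  exact: cosrep_mono IH.
exact: cosrep_mulcos.
Qed.

Lemma cosrep_poly (P : {poly R}) n (c0 c1 : R) :
  (size P <= n.+1)%N -> cosrep n (fun t => P.[c0 + c1 * cos t]).
Proof.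
move=> sP.
apply: (cosrep_ext (f := fun t => \sum_(i < n.+1) P`_i * (c0 + c1 * cos t) ^+ i)).
  by move=> t; rewrite (horner_coef_wide _ sP).
apply: cosrep_sum => i; apply: cosrep_scale.
apply: cosrep_mono (cosrep_pow c0 c1 i); rewrite -ltnS; exact: ltn_ord.
Qed.
End S.

End Aux.
Import Aux.

Lemma node_eq (R : realType) (ti ti1 : R) m k :
  cgl_node ti ti1 m k = (ti + (ti1 - ti) / 2) + (- ((ti1 - ti) / 2)) * cos (k%:R * pi / m%:R).
Proof. rewrite /cgl_node /cheb_tau; ring. Qed.

Lemma node_in (R : realType) (ti ti1 : R) m k : ti < ti1 ->
  ti <= cgl_node ti ti1 m k <= ti1.
Proof.
move=> h; rewrite node_eq.
have := cos_le1 (k%:R * pi / m%:R : R); have := cos_geN1 (k%:R * pi / m%:R : R).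
move=> h1 h2; apply/andP; split; nra.
Qed.

Lemma poly_bound (R : realType) (ti ti1 : R) (p q : nat) (psi : {poly R}) (C : R) :
  ti < ti1 -> (0 < p)%N -> (0 < q)%N -> 0 <= C -> (size psi <= p.+1)%N ->
  (forall k, (k <= q * p)%N -> 0 <= psi.[cgl_node ti ti1 (q * p) k]) ->
  (forall l, (l <= p)%N -> psi.[cgl_node ti ti1 (q * p) (l * q)] <= C) ->
  forall t, ti <= t <= ti1 ->
  - (pi ^+ 2 * C / 8 * Num.sqrt p%:R * (p%:R / (q * p)%N%:R) ^+ 2) <= psi.[t].
Proof.
move=> hti p0 q0 C0 sp Hn Hc t ht.
set c0 := ti + (ti1 - ti) / 2.
set c1 := - ((ti1 - ti) / 2).
have d0 : 0 < ti1 - ti by rewrite subr_gt0.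
have c1n0 : c1 != 0 by rewrite /c1 oppr_eq0 gt_eqF // divr_gt0.
have [a Ha] := @cosrep_poly R psi p c0 c1 sp.
set x := (t - c0) / c1.
have hx : -1 <= x <= 1.
  have -> : x = (ti + ti1 - 2 * t) / (ti1 - ti) by rewrite /x /c0 /c1; field; rewrite gt_eqF.
  case/andP: ht => h1 h2.
  rewrite ler_pdivlMr // ler_pdivrMr //; apply/andP; split; lra.
have hcx : cos (acos x) = x by apply: acosK; rewrite in_itv /=.
have -> : t = c0 + c1 * cos (acos x) by rewrite hcx /x; field.
rewrite Ha.
apply: core_theta => //.
- move=> k hk; rewrite -Ha -node_eq; exact: Hn.
- move=> l hl; rewrite -Ha -node_eq; exact: Hc.
- by rewrite acos_ge0 // acos_lepi.
Qed.

Theorem mainTheorem5 (R : realType) (ti ti1 : R) (p m : nat)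
  (phiL phi phiR : {poly R}) (Cbox : R) :
  ti < ti1 ->
  0 < Cbox ->
  (size phiL <= p.+1)%N -> (size phi <= p.+1)%N -> (size phiR <= p.+1)%N ->
  (exists q : nat, (0 < q)%N /\ m = (q * p)%N) ->
  (forall k : nat, (k <= m)%N ->
     phiL.[cgl_node ti ti1 m k] <= phi.[cgl_node ti ti1 m k] /\
     phi.[cgl_node ti ti1 m k] <= phiR.[cgl_node ti ti1 m k]) ->
  (forall t : R, ti <= t <= ti1 -> phiR.[t] - phiL.[t] <= Cbox) ->
  forall t : R, ti <= t <= ti1 ->
    phiL.[t] - pi ^+ 2 * Cbox / 8 * Num.sqrt (p%:R) * (p%:R / m%:R) ^+ 2
      <= phi.[t] /\
    phi.[t] <= phiR.[t] + pi ^+ 2 * Cbox / 8 * Num.sqrt (p%:R) * (p%:R / m%:R) ^+ 2.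
Proof.
move=> hti C0 sL s sR [q [q0 ->]] Hnode Hbox t ht.
case: p sL s sR Hnode => [|p] sL s sR Hnode.
  have EL x : phiL.[x] = phiL`_0 by rewrite {1}(size1_polyC sL) hornerC.
  have E x : phi.[x] = phi`_0 by rewrite {1}(size1_polyC s) hornerC.
  have ER x : phiR.[x] = phiR`_0 by rewrite {1}(size1_polyC sR) hornerC.
  have [h1 h2] := Hnode 0%N (leq0n _).
  rewrite !EL !E !ER in h1 h2 *.
  by rewrite mulr0n sqrtr0 !mulr0 !mul0r subr0 addr0 h1 h2.
have hL : forall k, (k <= q * p.+1)%N -> 0 <= (phi - phiL).[cgl_node ti ti1 (q * p.+1) k].
  by move=> k hk; rewrite hornerD hornerN subr_ge0; case: (Hnode k hk).
have hR : forall k, (k <= q * p.+1)%N -> 0 <= (phiR - phi).[cgl_node ti ti1 (q * p.+1) k].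
  by move=> k hk; rewrite hornerD hornerN subr_ge0; case: (Hnode k hk).
have hl : (q * p.+1 >= 0)%N by [].
have cL : forall l, (l <= p.+1)%N -> (phi - phiL).[cgl_node ti ti1 (q * p.+1) (l * q)] <= Cbox.
  move=> l hl'; rewrite hornerD hornerN.
  have hk : (l * q <= q * p.+1)%N by rewrite mulnC leq_mul2l hl' orbT.
  have [h1 h2] := Hnode _ hk.
  have := Hbox _ (@node_in R ti ti1 (q * p.+1) (l * q) hti); lra.
have cR : forall l, (l <= p.+1)%N -> (phiR - phi).[cgl_node ti ti1 (q * p.+1) (l * q)] <= Cbox.
  move=> l hl'; rewrite hornerD hornerN.
  have hk : (l * q <= q * p.+1)%N by rewrite mulnC leq_mul2l hl' orbT.
  have [h1 h2] := Hnode _ hk.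
  have := Hbox _ (@node_in R ti ti1 (q * p.+1) (l * q) hti); lra.
have sz1 : (size (phi - phiL)%R <= p.+2)%N.
  by apply: leq_trans (size_polyD _ _) _; rewrite size_polyN geq_max s sL.
have sz2 : (size (phiR - phi)%R <= p.+2)%N.
  by apply: leq_trans (size_polyD _ _) _; rewrite size_polyN geq_max s sR.
have B1 := @poly_bound R ti ti1 p.+1 q (phi - phiL) Cbox hti (ltn0Sn p) q0 (ltW C0) sz1 hL cL t ht.
have B2 := @poly_bound R ti ti1 p.+1 q (phiR - phi) Cbox hti (ltn0Sn p) q0 (ltW C0) sz2 hR cR t ht.
rewrite hornerD hornerN in B1; rewrite hornerD hornerN in B2.
set B := pi ^+ 2 * Cbox / 8 * Num.sqrt p.+1%:R * (p.+1%:R / (q * p.+1)%N%:R) ^+ 2 in B1 B2 *.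
split; lra.
Qed.
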